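(* Let $G=(V,E)$ be a finite, simple, connected graph such that $\kappa(x,y)\geq K>0$ for all adjacent vertices $x\sim y$. Then \[ \operatorname{diam}_{\operatorname{eff}}(G)\leq \frac{\max_{v\in V}\operatorname{Deg}(v)}{K}. \]
   Context: $d$ denotes the combinatorial graph distance and $\operatorname{Deg}(v)=|\{w\in V: w\sim v\}|$. The effective diameter is $\operatorname{diam}_{\operatorname{eff}}(G)=\frac{1}{|V|^2}\sum_{x,y\in V}d(x,y)$. The (non-normalized) Laplacian is $\Delta f(x)=\sum_{y\sim x}(f(y)-f(x))$ for $f:V\to\mathbb{R}$. The Ollivier curvature of an edge $x\sim y$ is $\kappa(x,y)=\inf\{\Delta f(x)-\Delta f(y) : f:V\to\mathbb{R},\ f(y)-f(x)=1,\ \max_{u\sim v}|f(u)-f(v)|=1\}$. *)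

(* Defs.v *)
From mathcomp Require Import all_boot all_order all_algebra.
Set Implicit Arguments. Unset Strict Implicit. Unset Printing Implicit Defensive.
Import Order.TTheory GRing.Theory Num.Theory.
Local Open Scope ring_scope.

Definition simple_graph (T : finType) (e : rel T) : Prop :=
  symmetric e /\ irreflexive e.

Definition graph_connected (T : finType) (e : rel T) : Prop :=
  forall x y : T, connect e x y.

Definition gball (T : finType) (e : rel T) (x : T) (n : nat) : {set T} :=
  iter n (fun S : {set T} => S :|: [set y | [exists z in S, e z y]]) [set x].

(* combinatorial graph distance: least n with y in the n-ball of x
   (for connected graphs this n is < #|T|) *)
Definition gdist (T : finType) (e : rel T) (x y : T) : nat :=
  find (fun n => y \in gball e x n) (iota 0 #|T|).

Definition Deg (T : finType) (e : rel T) (v : T) : nat := #|[set w | e v w]|.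

Definition maxDeg (T : finType) (e : rel T) : nat := (\max_(v : T) Deg e v)%N.

Definition diam_eff (R : realFieldType) (T : finType) (e : rel T) : R :=
  (#|T|%:R ^+ 2)^-1 * \sum_(x : T) \sum_(y : T) (gdist e x y)%:R.

Definition laplacian (R : realFieldType) (T : finType) (e : rel T)
  (f : T -> R) (x : T) : R := \sum_(y : T | e x y) (f y - f x).

Definition curv_admissible (R : realFieldType) (T : finType) (e : rel T)
  (x y : T) (f : T -> R) : Prop :=
  f y - f x = 1 /\
  (forall u v, e u v -> `|f u - f v| <= 1) /\
  (exists u v, e u v /\ `|f u - f v| = 1).

(* kappa(x,y) >= K, i.e. K is a lower bound of the set whose infimum is kappa *)
Definition curv_ge (R : realFieldType) (T : finType) (e : rel T)
  (x y : T) (K : R) : Prop :=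
  forall f : T -> R, curv_admissible e x y f ->
    K <= laplacian e f x - laplacian e f y.

(* Main.v *)
Require Import Defs.
From mathcomp Require Import all_boot all_order all_algebra.
From mathcomp Require Import zify ring lra.
Set Implicit Arguments. Unset Strict Implicit. Unset Printing Implicit Defensive.
Import Order.TTheory GRing.Theory Num.Theory.
Local Open Scope ring_scope.

Lemma gballS (T : finType) (e : rel T) x n y :
  (y \in gball e x n.+1) = (y \in gball e x n) || [exists z in gball e x n, e z y].
Proof. by rewrite /gball iterS in_setU inE. Qed.

Lemma gball_mono (T : finType) (e : rel T) x m n y :
  (m <= n)%N -> y \in gball e x m -> y \in gball e x n.
Proof.
move=> /subnK <-; elim: (n - m)%N => [|k IH] //= H.
by rewrite in_setU IH.
Qed.

Lemma gball_path (T : finType) (e : rel T) x p : forall w n,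
  w \in gball e x n -> path e w p -> last w p \in gball e x (n + size p).
Proof.
elim: p => [|z p IH] w n Hw /=; first by rewrite addn0.
case/andP=> ewz Hp.
rewrite addnS -addSn. apply: IH Hp. rewrite gballS; apply/orP; right.
by apply/existsP; exists w; rewrite Hw ewz.
Qed.

Lemma gball_conn (T : finType) (e : rel T) x y : connect e x y ->
  exists2 n, (n < #|T|)%N & y \in gball e x n.
Proof.
case/connectP=> p0 Hp0 ->.
case/shortenP: Hp0 => p Hp Hu _.
exists (size p); last first.
  have := @gball_path T e x p x 0%N. rewrite add0n. apply => //.
  by rewrite /gball /= set11.
have := max_card (mem (x :: p)). by rewrite (card_uniqP Hu).
Qed.

Lemma gdist_spec (T : finType) (e : rel T) x y : connect e x y ->
  forall m, (y \in gball e x m) = (gdist e x y <= m)%N.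
Proof.
case/gball_conn => n Hn Hy.
have Hhas : has (fun k => y \in gball e x k) (iota 0 #|T|).
  by apply/hasP; exists n => //; rewrite mem_iota add0n Hn.
have Hk : (gdist e x y < #|T|)%N.
  by rewrite -[X in (_ < X)%N](size_iota 0 #|T|) -has_find.
have Pk : y \in gball e x (gdist e x y).
  have := nth_find 0%N Hhas. by rewrite nth_iota.
move=> m; apply/idP/idP.
- move=> Hm; rewrite leqNgt; apply/negP => Hlt.
  have := before_find 0%N Hlt. rewrite nth_iota ?add0n ?Hm //.
  exact: ltn_trans Hlt Hk.
- move=> Hkm; exact: gball_mono Hkm Pk.
Qed.

Lemma gdist_self (T : finType) (e : rel T) x : gdist e x x = 0%N.
Proof.
by apply/eqP; rewrite -leqn0 -gdist_spec ?connect0 // /gball /= set11.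
Qed.

Lemma gdist_edge (T : finType) (e : rel T) x u v : graph_connected e -> e u v ->
  (gdist e x v <= (gdist e x u).+1)%N.
Proof.
move=> C euv; rewrite -(gdist_spec (C x v)) gballS; apply/orP; right.
by apply/existsP; exists u; rewrite euv andbT (gdist_spec (C x u)).
Qed.

Lemma gdist_pred (T : finType) (e : rel T) x y n : graph_connected e ->
  gdist e x y = n.+1 -> exists2 z, e z y & gdist e x z = n.
Proof.
move=> C H.
have H1 : y \in gball e x n.+1 by rewrite (gdist_spec (C x y)) H.
have H2 : y \notin gball e x n by rewrite (gdist_spec (C x y)) H ltnn.
move: H1; rewrite gballS (negbTE H2) /= => /existsP [z /andP [Hz ezy]].
exists z => //. apply/eqP; rewrite eqn_leq -(gdist_spec (C x z)) Hz /=.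
by have := gdist_edge x C ezy; rewrite H ltnS.
Qed.

Lemma key (R : realFieldType) (T : finType) (e : rel T) (x : T) (K : R) :
  simple_graph e -> graph_connected e ->
  (forall u v, e u v -> curv_ge e u v K) ->
  forall y, K * (gdist e x y)%:R <=
    laplacian e (fun w => (gdist e x w)%:R : R) x
    - laplacian e (fun w => (gdist e x w)%:R : R) y.
Proof.
move=> [Hsym Hirr] C HK y.
move Hn: (gdist e x y) => n. elim: n y Hn => [|n IH] y Hn.
  have : y \in gball e x 0 by rewrite (gdist_spec (C x y)) Hn.
  rewrite /gball /= => /set1P ->. by rewrite mulr0 subrr.
have [z ezy Hz] := gdist_pred C Hn.
have H1 := IH z Hz.
have H2 : K <= laplacian e (fun w => (gdist e x w)%:R : R) z
    - laplacian e (fun w => (gdist e x w)%:R : R) y.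
  apply: (HK z y ezy). split; [|split].
  - by rewrite Hn Hz -natr1; lra.
  - move=> u v euv.
    have h1 : (gdist e x v)%:R <= (gdist e x u)%:R + 1 :> R.
      by rewrite natr1 ler_nat gdist_edge.
    have h2 : (gdist e x u)%:R <= (gdist e x v)%:R + 1 :> R.
      by rewrite natr1 ler_nat gdist_edge // Hsym.
    rewrite ler_norml; apply/andP; split; lra.
  - exists z, y; split => //.
    rewrite Hz Hn -natr1.
    have -> : (n%:R - (n%:R + 1) : R) = -1 by ring.
    by rewrite normrN normr1.
rewrite -natr1 mulrDr mulr1. lra.
Qed.

Lemma lap_sum (R : realFieldType) (T : finType) (e : rel T) (f : T -> R) :
  symmetric e -> \sum_y laplacian e f y = 0.
Proof.
move=> Hs. rewrite /laplacian.
under eq_bigr => y _ do rewrite sumrB.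
rewrite sumrB (exchange_big_dep xpredT) //=; apply/eqP; rewrite subr_eq0; apply/eqP.
apply: eq_bigr => w _; apply: eq_bigl => y; by rewrite Hs.
Qed.

Lemma lap_x (R : realFieldType) (T : finType) (e : rel T) (x : T) :
  graph_connected e ->
  laplacian e (fun w => (gdist e x w)%:R : R) x <= (maxDeg e)%:R.
Proof.
move=> C; rewrite /laplacian gdist_self.
apply: (@le_trans _ _ (\sum_(w | e x w) 1)).
  apply: ler_sum => w exw; rewrite subr0 (ler_nat R _ 1).
  by have := gdist_edge x C exw; rewrite gdist_self.
rewrite sumr_const ler_nat.
have : (Deg e x <= maxDeg e)%N by rewrite /maxDeg; exact: (leq_bigmax (F := Deg e) x).
by rewrite /Deg cardsE.
Qed.

Lemma row_bound (R : realFieldType) (T : finType) (e : rel T) (x : T) (K : R) :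
  simple_graph e -> graph_connected e ->
  (forall u v, e u v -> curv_ge e u v K) ->
  K * \sum_y (gdist e x y)%:R <= #|T|%:R * (maxDeg e)%:R.
Proof.
move=> G C HK.
set f := (fun w => (gdist e x w)%:R : R).
rewrite mulr_sumr.
apply: (@le_trans _ _ (\sum_(y : T) (laplacian e f x - laplacian e f y))).
  by apply: ler_sum => y _; apply: key.
rewrite sumrB lap_sum; last by case: G.
rewrite subr0 sumr_const mulr_natl.
rewrite (_ : #|_| = #|T|) //.
by apply: ler_wMn2r; apply: lap_x.
Qed.

Theorem theorem3p1 (R : realFieldType) (T : finType) (e : rel T) (K : R) :
  simple_graph e -> graph_connected e -> 0 < K ->
  (forall x y : T, e x y -> curv_ge e x y K) ->
  diam_eff R e <= (maxDeg e)%:R / K.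
Proof.
move=> G C K0 HK.
have HS : \sum_(x : T) \sum_(y : T) (gdist e x y)%:R <=
          #|T|%:R ^+ 2 * ((maxDeg e)%:R / K) :> R.
  apply: (@le_trans _ _ (\sum_(x : T) (#|T|%:R * ((maxDeg e)%:R / K)))).
    apply: ler_sum => x _.
    rewrite mulrA ler_pdivlMr //.
    by rewrite mulrC; apply: row_bound.
  by rewrite sumr_const (_ : #|_| = #|T|) // expr2 -mulrA [X in _ <= X]mulr_natl.
rewrite /diam_eff.
have [N0|N0] := eqVneq (#|T|%:R : R) 0.
  rewrite N0 expr0n /= invr0 mul0r.
  by apply: divr_ge0; [exact: ler0n | exact: ltW].
apply: (@le_trans _ _ ((#|T|%:R ^+ 2)^-1 * (#|T|%:R ^+ 2 * ((maxDeg e)%:R / K)))).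
  by apply: ler_wpM2l => //; rewrite invr_ge0 exprn_ge0 // ler0n.
by rewrite mulrA mulVf ?mul1r // expf_neq0.
Qed.
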